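(* Let $(F_i)_{i\in\mathbb{Z}}$ be a sequence of $2\times 2$ matrices with non-negative integer entries and determinant $1$, acting on the 2-torus $\mathbb{T}^2=\mathbb{R}^2/\mathbb{Z}^2$ (flat metric inherited from $\mathbb{R}^2$) by multiplication on column vectors, and suppose each $F_i$ is factored as $$F_i=\begin{pmatrix}1&0\\ n_{i,k_i}&1\end{pmatrix}\begin{pmatrix}1&n_{i,k_i-1}\\ 0&1\end{pmatrix}\cdots\begin{pmatrix}1&0\\ n_{i,2}&1\end{pmatrix}\begin{pmatrix}1&n_{i,1}\\ 0&1\end{pmatrix}$$ with non-negative integers $n_{i,1},\dots,n_{i,k_i}$. If $n_{i,k_i}\neq 0$ and $n_{i,1}\neq 0$ for every $i\in\mathbb{Z}$, then $(F_i)_{i\in\mathbb{Z}}$ is an Anosov family on $\mathbb{T}^2$.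
   Context: An Anosov family on a sequence of compact Riemannian manifolds $(M_i)_{i\in\mathbb{Z}}$ (here all equal to $\mathbb{T}^2$) with diffeomorphisms $f_i:M_i\to M_{i+1}$ is one for which the tangent bundle has a continuous splitting $E^s\oplus E^u$ invariant under the derivatives and there are $\lambda\in(0,1)$, $c>0$ with $\|D(f_{i+n-1}\circ\cdots\circ f_i)v\|\le c\lambda^n\|v\|$ for $v\in E^s$ and $\|D(f_{i-n}^{-1}\circ\cdots\circ f_{i-1}^{-1})v\|\le c\lambda^n\|v\|$ for $v\in E^u$, for all $i\in\mathbb{Z}$, $n\ge 1$. *)

(* Defs.v *)
From HB Require Import structures.
From mathcomp Require Import all_boot all_order all_algebra.
From mathcomp Require Import all_classical all_reals all_analysis.
Set Implicit Arguments. Unset Strict Implicit. Unset Printing Implicit Defensive.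
Import Order.TTheory GRing.Theory Num.Theory numFieldNormedType.Exports.
Local Open Scope ring_scope.

Definition upper_el (m : nat) : 'M[int]_2 :=
  \matrix_(a < 2, b < 2) (if (a == b) then 1 else if (a == 0 :> nat) then m%:Z else 0).
Definition lower_el (m : nat) : 'M[int]_2 :=
  \matrix_(a < 2, b < 2) (if (a == b) then 1 else if (a == 1 :> nat) then m%:Z else 0).

(* j-th factor (j >= 1): odd positions are upper, even positions lower. *)
Definition factor_el (n : nat -> nat) (j : nat) : 'M[int]_2 :=
  if odd j then upper_el (n j) else lower_el (n j).

(* M_k * M_(k-1) * ... * M_1 *)
Definition factored_product (k : nat) (n : nat -> nat) : 'M[int]_2 :=
  \prod_(j < k) factor_el n (k - j)%N.

Definition enorm {R : realType} (v : 'cV[R]_2) : R :=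
  Num.sqrt (v 0 0 ^+ 2 + v 1 0 ^+ 2).

(* Forward composite D(f_(i+n-1) o ... o f_i) = F_(i+n-1) ... F_i. *)
Fixpoint fwd_prod {R : realType} (F : int -> 'M[R]_2) (i : int) (n : nat) : 'M[R]_2 :=
  match n with
  | 0 => 1%:M
  | n'.+1 => F (i + n'%:Z) *m fwd_prod F i n'
  end.

(* Backward composite D(f_(i-n)^-1 o ... o f_(i-1)^-1) = F_(i-n)^-1 ... F_(i-1)^-1. *)
Fixpoint bwd_prod {R : realType} (F : int -> 'M[R]_2) (i : int) (n : nat) : 'M[R]_2 :=
  match n with
  | 0 => 1%:M
  | n'.+1 => invmx (F (i - n'.+1%:Z)) *m bwd_prod F i n'
  end.

(* A field of subspaces of R^2 (subspace = row space of a 2x2 matrix, i.e.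
   the span of the transposes of its rows), parametrized by points of R^2,
   is continuous if it is locally spanned by continuous sections. *)
Definition continuous_subbundle {R : realType} (E : 'cV[R]_2 -> 'M[R]_2) : Prop :=
  forall x : 'cV[R]_2, exists B : 'cV[R]_2 -> 'M[R]_2,
    continuous B /\ (\forall y \near x, (B y == E y)%MS).

(* Points of T^2 are represented by points of
   R^2; the splitting is required to be Z^2-periodic (well defined on T^2).
   The tangent space at every point is R^2 and the derivative of x |-> F_i x
   is F_i at every point. *)
Definition linear_anosov_family {R : realType} (F : int -> 'M[R]_2) : Prop :=
  exists (Es Eu : int -> 'cV[R]_2 -> 'M[R]_2),
    (forall i x (z : 'cV[int]_2),
        (Es i (x + map_mx intr z)%R == Es i x)%MS /\
        (Eu i (x + map_mx intr z)%R == Eu i x)%MS) /\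
    (* splitting: T_x T^2 = Es ⊕ Eu *)
    (forall i x, (Es i x + Eu i x == 1%:M)%MS /\ ((Es i x :&: Eu i x)%MS == (0 : 'M[R]_2))%MS) /\
    (forall i, continuous_subbundle (Es i) /\ continuous_subbundle (Eu i)) /\
    (* invariance under the derivatives: D f_i (E_i(x)) = E_(i+1)(f_i x) *)
    (forall i x,
        (Es i x *m (F i)^T == Es (i + 1)%R (F i *m x)%R)%MS /\
        (Eu i x *m (F i)^T == Eu (i + 1)%R (F i *m x)%R)%MS) /\
    exists (lam c : R), 0 < lam < 1 /\ 0 < c /\
      (forall i x (v : 'cV[R]_2) (n : nat), (0 < n)%N ->
         (v^T <= Es i x)%MS ->
         enorm (fwd_prod F i n *m v) <= c * lam ^+ n * enorm v) /\
      (forall i x (v : 'cV[R]_2) (n : nat), (0 < n)%N ->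
         (v^T <= Eu i x)%MS ->
         enorm (bwd_prod F i n *m v) <= c * lam ^+ n * enorm v).

(* Main.v *)
Require Import Defs.
From HB Require Import structures.
From mathcomp Require Import all_boot all_order all_algebra.
From mathcomp Require Import all_classical all_reals all_analysis.
From mathcomp Require Import ring lra zify.
Import Order.TTheory GRing.Theory Num.Theory numFieldNormedType.Exports.
Local Open Scope ring_scope.

Lemma mul22 (R: pzRingType) m (A : 'M[R]_2) (B : 'M[R]_(2,m)) i j :
  (A *m B) i j = A i 0 * B 0 j + A i 1 * B 1 j.
Proof. rewrite mxE !big_ord_recl big_ord0 addr0. by congr (_ * _ + _ * _); congr (_ _ _); apply: val_inj. Qed.

Lemma I2P (i : 'I_2) : i = 0 \/ i = 1.
Proof. case: i => [[|[|i]] Hi]; [left|right|by []]; exact: val_inj. Qed.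

Lemma det22 (R : comPzRingType) (A : 'M[R]_2) : \det A = A 0 0 * A 1 1 - A 0 1 * A 1 0.
Proof.
rewrite (expand_det_row _ 0) !big_ord_recl big_ord0 addr0 /cofactor !det_mx11 /=.
rewrite !mxE /=.
have e1 : lift 0 0 = 1 :> 'I_2 by apply: val_inj.
have e2 : lift ord0 ord0 = 1 :> 'I_2 by apply: val_inj.
have e3 : lift (lift ord0 ord0) 0 = 0 :> 'I_2 by apply: val_inj.
have e4 : lift ord0 0 = 1 :> 'I_2 by apply: val_inj.
rewrite ?e1 ?e2 ?e3 ?e4 /=.
have e5 : lift 1 0 = 0 :> 'I_2 by apply: val_inj.
by rewrite e5 /= expr0 expr1 mul1r mulN1r mulrN.
Qed.

Section Core.
Variable R : realType.

Definition good (K : 'M[R]_2) :=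
  (forall a b, 1 <= K a b) /\ K 0 0 * K 1 1 - K 0 1 * K 1 0 = 1.

Definition v2 (x y : R) : 'cV[R]_2 := \col_i (if i == 0 then x else y).
Lemma v2E0 x y : v2 x y 0 0 = x. Proof. by rewrite mxE. Qed.
Lemma v2E1 x y : v2 x y 1 0 = y. Proof. by rewrite mxE. Qed.

Lemma fwd_split (K : int -> 'M[R]_2) i a b :
  fwd_prod K i (a + b) = fwd_prod K (i + a%:Z) b *m fwd_prod K i a.
Proof.
elim: b => [|b IH]; first by rewrite addn0 /= mul1mx.
rewrite addnS /= IH mulmxA. congr (K _ *m _ *m _). rewrite PoszD; ring.
Qed.

Lemma colsum_step (k00 k01 k10 k11 q0 q1 M : R) :
  1 <= k00 -> 1 <= k01 -> 1 <= k10 -> 1 <= k11 -> 0 <= q0 -> 0 <= q1 ->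
  1 <= M -> M <= q0 + q1 -> M + 1 <= (k00 * q0 + k01 * q1) + (k10 * q0 + k11 * q1).
Proof. move=> *; nra. Qed.

Lemma fwd_good (K : int -> 'M[R]_2) (HK : forall j, good (K j)) i m :
  (forall a b, 0 <= fwd_prod K i m a b) /\
  fwd_prod K i m 0 0 * fwd_prod K i m 1 1 - fwd_prod K i m 0 1 * fwd_prod K i m 1 0 = 1 /\
  m.+1%:R <= fwd_prod K i m 0 0 + fwd_prod K i m 1 0 /\
  m.+1%:R <= fwd_prod K i m 0 1 + fwd_prod K i m 1 1.
Proof.
elim: m => [|m [IH1 [IH2 [IH3 IH4]]]].
  rewrite /= !mxE /=. split; last by rewrite mulr1 mulr0 subr0 addr0 add0r.
  by move=> a b; rewrite mxE ler0n.
rewrite /=; set Q := fwd_prod K i m.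
have [Hk Hd] := HK (i + m%:Z).
have Hk0 : forall a b, 0 <= K (i + m%:Z) a b by move=> a b; apply: le_trans (Hk a b).
have Hm : 1 <= m.+1%:R :> R by rewrite ler1n.
split; first by move=> a b; rewrite mul22 addr_ge0 // mulr_ge0.
split.
  rewrite !mul22.
  apply: (@eq_trans _ _ ((K (i+m%:Z) 0 0 * K (i+m%:Z) 1 1 - K (i+m%:Z) 0 1 * K (i+m%:Z) 1 0) * (Q 0 0 * Q 1 1 - Q 0 1 * Q 1 0))); first ring.
  by rewrite Hd IH2 mulr1.
rewrite -[m.+2]addn1 natrD !mul22; split; apply: colsum_step => //.
Qed.

Lemma phi_le (x0 x1 y0 y1 : R) : 0 < x0 + x1 -> 0 < y0 + y1 ->
  (x1 / (x0 + x1) <= y1 / (y0 + y1)) = (x1 * y0 <= y1 * x0).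
Proof.
move=> hx hy. rewrite ler_pdivlMr // mulrAC ler_pdivrMr //.
by rewrite !mulrDr [x1 * y1]mulrC lerD2r.
Qed.

Definition lo (P : 'M[R]_2) := P 1 0 / (P 0 0 + P 1 0).
Definition hi (P : 'M[R]_2) := P 1 1 / (P 0 1 + P 1 1).

Lemma lo_hi (P : 'M[R]_2) : 0 < P 0 0 + P 1 0 -> 0 < P 0 1 + P 1 1 ->
  P 0 0 * P 1 1 - P 0 1 * P 1 0 = 1 -> lo P <= hi P.
Proof. move=> h1 h2 hd; rewrite /lo /hi phi_le //; lra. Qed.

Lemma combo (p00 p01 p10 p11 q0 q1 : R) :
  0 <= p00 * p11 - p01 * p10 -> 0 <= q0 -> 0 <= q1 ->
  0 < p00 + p10 -> 0 < p01 + p11 ->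
  0 < (p00 * q0 + p01 * q1) + (p10 * q0 + p11 * q1) ->
  p10 / (p00 + p10) <= (p10 * q0 + p11 * q1) / ((p00 * q0 + p01 * q1) + (p10 * q0 + p11 * q1))
  <= p11 / (p01 + p11).
Proof.
move=> hd h0 h1 s0 s1 sw. rewrite !phi_le //; apply/andP; split; rewrite -subr_ge0.
  rewrite (_ : _ - _ = q1 * (p00 * p11 - p01 * p10)); first exact: mulr_ge0. ring.
rewrite (_ : _ - _ = q0 * (p00 * p11 - p01 * p10)); first exact: mulr_ge0. ring.
Qed.

Variable K : int -> 'M[R]_2.
Hypothesis HK : forall j, good (K j).

Definition PP (j : int) (m : nat) := fwd_prod K (j - m%:Z) m.

Lemma PP_split j m d : PP j (m + d) = PP j m *m fwd_prod K (j - (m + d)%N%:Z) d.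
Proof.
have e : j - m%:Z = j - (m+d)%N%:Z + d%:Z by rewrite PoszD; ring.
by rewrite /PP e -fwd_split (addnC d m).
Qed.

Lemma PP_good j m :
  (forall a b, 0 <= PP j m a b) /\
  PP j m 0 0 * PP j m 1 1 - PP j m 0 1 * PP j m 1 0 = 1 /\
  m.+1%:R <= PP j m 0 0 + PP j m 1 0 /\
  m.+1%:R <= PP j m 0 1 + PP j m 1 1.
Proof. exact: fwd_good. Qed.

Lemma PP_pos j m : 0 < PP j m 0 0 + PP j m 1 0 /\ 0 < PP j m 0 1 + PP j m 1 1.
Proof.
have [_ [_ [h1 h2]]] := PP_good j m.
by split; [apply: lt_le_trans h1 | apply: lt_le_trans h2]; rewrite ltr0Sn.
Qed.

Lemma nest j m m' : lo (PP j m) <= hi (PP j m').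
Proof.
have [hm|hm] := leqP m m'.
  rewrite -(subnKC hm) PP_split.
  set Q := fwd_prod _ _ _.
  have [P0 [Pd _]] := PP_good j m.
  have [Q0 _] := @fwd_good K HK (j - (m + (m' - m))%N%:Z) (m' - m).
  have [s0 s1] := PP_pos j m.
  have := PP_pos j (m + (m' - m)). rewrite PP_split -/Q => -[s0' s1'].
  have := PP_good j (m + (m' - m)). rewrite PP_split -/Q => -[_ [d' _]].
  apply: le_trans _ (lo_hi _ s0' s1' d').
  rewrite /lo !mul22.
  have := combo (PP j m 0 0) (PP j m 0 1) (PP j m 1 0) (PP j m 1 1) . 
  rewrite Pd ler01 => /(_ _ _ isT (Q0 0 0) (Q0 1 0) s0 s1).
  move: s0'; rewrite !mul22 => s0' /(_ s0') /andP[] //.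
rewrite -(subnKC (ltnW hm)) PP_split.
set Q := fwd_prod _ _ _.
have [P0 [Pd _]] := PP_good j m'.
have [Q0 _] := @fwd_good K HK (j - (m' + (m - m'))%N%:Z) (m - m').
have [s0 s1] := PP_pos j m'.
have := PP_pos j (m' + (m - m')). rewrite PP_split -/Q => -[s0' s1'].
have := PP_good j (m' + (m - m')). rewrite PP_split -/Q => -[_ [d' _]].
apply: le_trans (lo_hi _ s0' s1' d') _.
rewrite /hi !mul22.
have := combo (PP j m' 0 0) (PP j m' 0 1) (PP j m' 1 0) (PP j m' 1 1) .
rewrite Pd ler01 => /(_ _ _ isT (Q0 0 1) (Q0 1 1) s0 s1).
move: s1'; rewrite !mul22 => s1' /(_ s1') /andP[] //.
Qed.


Definition rr (j : int) : R := sup (range (fun m => lo (PP j m))).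

Lemma rr_has_sup j : has_sup (range (fun m => lo (PP j m))).
Proof.
split; first by exists (lo (PP j 0)), 0%N.
by exists (hi (PP j 0)) => _ [m _ <-]; exact: nest.
Qed.

Lemma rr_lo j m : lo (PP j m) <= rr j.
Proof. by apply: sup_upper_bound (rr_has_sup j) _ _; exists m. Qed.

Lemma rr_hi j m : rr j <= hi (PP j m).
Proof.
apply: ge_sup; first by exists (lo (PP j 0)), 0%N.
by move=> _ [m' _ <-]; exact: nest.
Qed.

Lemma rr_01 j : 0 <= rr j <= 1.
Proof.
have [P0 _] := PP_good j 0. have [s0 s1] := PP_pos j 0.
apply/andP; split.
  by apply: le_trans _ (rr_lo j 0); rewrite /lo divr_ge0 // addr_ge0.
apply: (le_trans (rr_hi j 0)).  rewrite /hi ler_pdivrMr // mul1r lerDr //.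
Qed.

Lemma squeeze (x y : R) (L U : nat -> R) :
  (forall m, L m <= x <= U m) -> (forall m, L m <= y <= U m) ->
  (forall m, U m - L m <= m.+1%:R^-1) -> x = y.
Proof.
move=> hx hy hw.
have hb : forall m, `|x - y| <= m.+1%:R^-1.
  move=> m; apply: le_trans (hw m).
  have := hx m; have := hy m => /andP[a b] /andP[c d].
  rewrite ler_norml; apply/andP; split; lra.
apply/eqP; rewrite -subr_eq0 -normr_eq0; apply/negPn/negP => hne.
have he : 0 < `|x - y| by rewrite lt_def hne normr_ge0.
set N := Num.Def.archi_bound (`|x - y|^-1).
have hi : 0 < `|x - y|^-1 by rewrite invr_gt0.
have hN := archi_boundP (ltW hi).
have := hb N. rewrite -(ler_pM2r (ltr0Sn R N)) mulVf ?pnatr_eq0 //.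
apply/negP; rewrite -ltNge.
rewrite -(ltr_pM2l hi) mulr1 mulrA mulVf ?gt_eqF // mul1r.
apply: lt_le_trans hN _. by rewrite ler_nat.
Qed.

Lemma width j m : hi (PP j m) - lo (PP j m) <= m.+1%:R^-1.
Proof.
have [P0 [Pd [h1 h2]]] := PP_good j m. have [s0 s1] := PP_pos j m.
rewrite /hi /lo.
have -> : PP j m 1 1 / (PP j m 0 1 + PP j m 1 1) - PP j m 1 0 / (PP j m 0 0 + PP j m 1 0)
   = (PP j m 0 0 * PP j m 1 1 - PP j m 0 1 * PP j m 1 0) / ((PP j m 0 0 + PP j m 1 0) * (PP j m 0 1 + PP j m 1 1)).
  field. by rewrite !gt_eqF.
rewrite Pd div1r.
rewrite lef_pV2 ?posrE ?ltr0Sn ?mulr_gt0 //.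
rewrite -[_%:R]mulr1; apply: ler_pM => //.
by apply: le_trans h2; rewrite ler1n.
Qed.

Definition uu j := v2 (1 - rr j) (rr j).

Lemma PP_succ j m : PP (j + 1) m.+1 = K j *m PP j m.
Proof.
rewrite /PP /=. have e : j + 1 - (m.+1)%:Z = j - m%:Z by rewrite -[m.+1]addn1 PoszD; ring.
rewrite e. congr (K _ *m _). ring.
Qed.

Lemma cross_id (k00 k01 k10 k11 p0 p1 u0 u1 : R) :
  (k10 * u0 + k11 * u1) * (k00 * p0 + k01 * p1) - (k10 * p0 + k11 * p1) * (k00 * u0 + k01 * u1)
  = (k00 * k11 - k01 * k10) * (u1 * p0 - p1 * u0).
Proof. ring. Qed.

Lemma inv_step j : exists A, 2 <= A /\ K j *m uu j = A *: uu (j + 1).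
Proof.
have [Hk Hd] := HK j.
have Hk0 : forall a b, 0 <= K j a b by move=> a b; apply: le_trans (Hk a b).
have /andP[r0 r1] := rr_01 j.
set w := K j *m uu j.
have w0 : w 0 0 = K j 0 0 * (1 - rr j) + K j 0 1 * rr j by rewrite /w mul22 /uu v2E0 v2E1.
have w1 : w 1 0 = K j 1 0 * (1 - rr j) + K j 1 1 * rr j by rewrite /w mul22 /uu v2E0 v2E1.
set A := w 0 0 + w 1 0.
have hA : 2 <= A.
  rewrite /A w0 w1.
  have := Hk 0 0; have := Hk 0 1; have := Hk 1 0; have := Hk 1 1. 
  have : 0 <= 1 - rr j by lra. move=> *; nra.
have hA0 : 0 < A by apply: (lt_le_trans _ hA); lra.
have key : w 1 0 / A = rr (j + 1).
  apply: (@squeeze _ _ (fun m => lo (PP (j + 1) m.+1)) (fun m => hi (PP (j + 1) m.+1))).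
  - move=> m. have [s0 s1] := PP_pos (j + 1) m.+1. move: s0 s1.
    rewrite /lo /hi PP_succ !mul22 => s0 s1.
    have [Q0 _] := PP_good j m. have [t0 t1] := PP_pos j m.
    have hl := rr_lo j m. have hh := rr_hi j m.
    move: hl hh; rewrite /lo /hi.
    have hu : rr j = rr j / ((1 - rr j) + rr j) by rewrite subrK divr1.
    rewrite {1 2}hu !phi_le ?subrK ?ltr01 // => hl hh.
    have hA' : 0 < (K j 0 0 * (1 - rr j) + K j 0 1 * rr j) + (K j 1 0 * (1 - rr j) + K j 1 1 * rr j).
      by rewrite -w0 -w1.
    rewrite /A w0 w1 /uu !v2E0 !v2E1 !phi_le //.
    apply/andP; split; rewrite -subr_ge0.
      by rewrite cross_id Hd mul1r subr_ge0.
    rewrite (_ : _ - _ = - ((K j 1 0 * (1 - rr j) + K j 1 1 * rr j) * (K j 0 0 * PP j m 0 1 + K j 0 1 * PP j m 1 1) -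
       (K j 1 0 * PP j m 0 1 + K j 1 1 * PP j m 1 1) * (K j 0 0 * (1 - rr j) + K j 0 1 * rr j))); last by ring.
    rewrite cross_id Hd mul1r. lra.
  - by move=> m; apply/andP; split; [exact: rr_lo | exact: rr_hi].
  - move=> m; apply: le_trans (width _ _) _; by rewrite lef_pV2 ?posrE ?ltr0Sn // ler_nat.
exists A; split => //.
apply/matrixP => a b.
have -> : b = 0 by apply/val_inj; case: b => [[]].
rewrite [RHS]mxE /uu -key.
have hAn : A != 0 by rewrite gt_eqF.
case: (I2P a) => ->; rewrite ?v2E0 ?v2E1.
  by rewrite mulrBr mulr1 [A * _]mulrC divfK // /A addrK.
by rewrite mulrC divfK.
Qed.

Lemma rr_strict j : 0 < rr j < 1.
Proof.
have [A [hA e]] := inv_step (j - 1). rewrite subrK in e.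
have [Hk _] := HK (j - 1). have /andP[r0 r1] := rr_01 (j - 1).
have e0 := congr1 (fun M : 'cV[R]_2 => M 0 0) e.
have e1 := congr1 (fun M : 'cV[R]_2 => M 1 0) e.
move: e0 e1; rewrite /= !mul22 !mxE /= => e0 e1.
have := Hk 0 0; have := Hk 0 1; have := Hk 1 0; have := Hk 1 1 => k11 k10 k01 k00.
have h0 : 1 <= A * (1 - rr j) by rewrite -e0; nra.
have h1 : 1 <= A * rr j by rewrite -e1; nra.
apply/andP; split; nra.
Qed.

Lemma core_exists : exists r : int -> R, forall j, 0 < r j < 1 /\
  exists A, 2 <= A /\ K j *m v2 (1 - r j) (r j) = A *: v2 (1 - r (j + 1)) (r (j + 1)).
Proof. exists rr => j; split; [exact: rr_strict | exact: inv_step]. Qed.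

End Core.
Arguments good {R}. Arguments v2 {R}. Arguments core_exists {R K}. Arguments v2E0 {R}. Arguments v2E1 {R}.

Lemma upE c : upper_el c 0 0 = 1 /\ upper_el c 0 1 = c%:Z /\ upper_el c 1 0 = 0 /\ upper_el c 1 1 = 1.
Proof. by rewrite !mxE. Qed.
Lemma lowE c : lower_el c 0 0 = 1 /\ lower_el c 0 1 = 0 /\ lower_el c 1 0 = c%:Z /\ lower_el c 1 1 = 1.
Proof. by rewrite !mxE. Qed.

Lemma fp_succ k n : factored_product k.+1 n = factor_el n k.+1 *m factored_product k n.
Proof.
rewrite /factored_product big_ord_recl mulmxE subn0. congr (_ * _).
Qed.

Lemma fp_inv k n : (forall a b, 0 <= factored_product k n a b) /\
  1 <= factored_product k n 0 0 /\ 1 <= factored_product k n 1 1.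
Proof.
elim: k => [|k [h0 [h1 h2]]].
  rewrite /factored_product big_ord0 !mxE /=; split => // a b; rewrite mxE; by case: (a == b).
rewrite fp_succ /factor_el.
have hn : 0 <= (n k.+1)%:Z by [].
have g00 := h0 0 0; have g01 := h0 0 1; have g10 := h0 1 0; have g11 := h0 1 1.
case: (odd k.+1); [have [e00 [e01 [e10 e11]]] := upE (n k.+1) | have [e00 [e01 [e10 e11]]] := lowE (n k.+1)];
  (split; [move=> a b; rewrite mul22; case: (I2P a) => ->; rewrite ?e00 ?e01 ?e10 ?e11;
     have := h0 0 b; have := h0 1 b; move=> *; by rewrite addr_ge0 ?mulr_ge0 |]);
  rewrite !mul22 ?e00 ?e01 ?e10 ?e11.
  all: rewrite ?mul1r ?mul0r ?add0r ?addr0; split => //.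
  all: first [by apply: le_trans h1 _; rewrite ?lerDl ?lerDr mulr_ge0 | by apply: le_trans h2 _; rewrite ?lerDl ?lerDr mulr_ge0 | idtac].
Qed.

Lemma fp_01 k n : (n 1%N)%:Z <= factored_product k.+1 n 0 1.
Proof.
elim: k => [|k IH].
  rewrite fp_succ /factor_el /= mul22 /factored_product big_ord0 !mxE /=.
  by rewrite mulr0 add0r mulr1.
have [h0 _] := fp_inv k.+1 n.
rewrite fp_succ /factor_el.
have hn : 0 <= (n k.+2)%:Z by [].
case: (odd k.+2); [have [e00 [e01 [e10 e11]]] := upE (n k.+2) | have [e00 [e01 [e10 e11]]] := lowE (n k.+2)];
  rewrite !mul22 ?e00 ?e01 ?e10 ?e11 ?mul1r ?mul0r ?addr0 //.
apply: le_trans IH _; by rewrite lerDl mulr_ge0.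
Qed.

Lemma fp_ge1 k n : (0 < k)%N -> ~~ odd k -> n k <> 0%N -> n 1%N <> 0%N ->
  forall a b, 1 <= factored_product k n a b.
Proof.
case: k => [//|[//|k]] _ hodd hk h1.
rewrite fp_succ /factor_el (negbTE hodd).
have [h0 [d0 d1]] := fp_inv k.+1 n. have h01 := fp_01 k n.
have [e00 [e01 [e10 e11]]] := lowE (n k.+2).
have hk' : 1 <= (n k.+2)%:Z by rewrite lez_nat lt0n; apply/eqP.
have h1' : 1 <= (n 1%N)%:Z by rewrite lez_nat lt0n; apply/eqP.
have h01' := le_trans h1' h01.
move=> a b; rewrite mul22; case: (I2P a) => ->; case: (I2P b) => ->; rewrite ?e00 ?e01 ?e10 ?e11 ?mul1r ?mul0r ?addr0 //.
  by apply: ler_wpDr => //; apply: mulr_ege1.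
by apply: ler_wpDr => //; apply: mulr_ege1.
Qed.

Section Main.
Variable R : realType.

Definition Eline (v : 'cV[R]_2) : 'M[R]_2 := (const_mx 1 : 'M[R]_(2,1)) *m v^T.

Lemma ElineE v a b : Eline v a b = v b 0.
Proof. by rewrite mxE big_ord1 !mxE mul1r. Qed.

Lemma ElineM v (G : 'M[R]_2) : Eline v *m G^T = Eline (G *m v).
Proof. by rewrite /Eline -mulmxA -trmx_mul. Qed.

Lemma ElineZ a v : a != 0 -> (Eline (a *: v) == Eline v)%MS.
Proof.
move=> ha; rewrite /Eline linearZ /= -scalemxAr; apply/eqmxP; exact: eqmx_scale.
Qed.

Lemma Eline_rank v : (\rank (Eline v) <= 1)%N.
Proof. exact: leq_trans (mxrankM_maxr _ _) (rank_leq_row _). Qed.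

Lemma Eline_sub v w : (w^T <= Eline v)%MS -> exists mu, w = mu *: v.
Proof.
case/submxP => D hD. exists ((D *m (const_mx 1 : 'M[R]_(2,1))) 0 0). apply: trmx_inj.
rewrite hD /Eline mulmxA {1}[D *m _]mx11_scalar mul_scalar_mx.
by rewrite linearZ.
Qed.

Lemma Eline_split (u s : 'cV[R]_2) : u 0 0 * s 1 0 - u 1 0 * s 0 0 != 0 ->
  (Eline u + Eline s == 1%:M)%MS /\ ((Eline u :&: Eline s)%MS == (0 : 'M[R]_2))%MS.
Proof.
move=> hd.
pose X := \matrix_(a < 2, b < 2) (if a == 0 then u b 0 else s b 0) : 'M[R]_2.
have hX : X \in unitmx by rewrite unitmxE det22 !mxE /= unitfE.
have hfull : (1%:M <= Eline u + Eline s)%MS.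
  have h1X : (1%:M <= X)%MS by rewrite sub1mx row_full_unit.
  apply: submx_trans h1X _.
  apply/row_subP => a. case: (I2P a) => ->.
    apply: submx_trans (addsmxSl _ _).
    rewrite (_ : row 0 X = row 0 (Eline u)) ?row_sub //.
    by apply/matrixP => i j; rewrite [LHS]mxE [RHS]mxE ElineE mxE.
  apply: submx_trans (addsmxSr _ _).
  rewrite (_ : row 1 X = row 0 (Eline s)) ?row_sub //.
  by apply/matrixP => i j; rewrite [LHS]mxE [RHS]mxE ElineE mxE.
split; first by apply/andP; split; [exact: submx1 | exact: hfull].
have hr : \rank (Eline u + Eline s) = 2%N.
  apply/eqP; rewrite eqn_leq rank_leq_col /=.
  by have := mxrankS hfull; rewrite mxrank1.
have := mxrank_sum_cap (Eline u) (Eline s). rewrite hr.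
have := Eline_rank u; have := Eline_rank s => h1 h2 e.
have h0 : \rank (Eline u :&: Eline s)%MS == 0%N by apply/eqP; lia.
rewrite mxrank_eq0 in h0. rewrite (eqP h0).
by apply/andP; split; exact: submx_refl.
Qed.

Lemma enormZ (a : R) (v : 'cV[R]_2) : enorm (a *: v) = `|a| * enorm v.
Proof.
by rewrite /enorm !mxE !exprMn -mulrDr sqrtrM ?sqr_ge0 // sqrtr_sqr.
Qed.

Lemma sq_bounds (x y : R) : 0 <= x -> 0 <= y -> x + y = 1 ->
  2^-1 <= Num.sqrt (x ^+ 2 + y ^+ 2) <= 1.
Proof.
move=> hx hy hs. apply/andP; split.
  have e : Num.sqrt ((2^-1) ^+ 2) = 2^-1 :> R by rewrite sqrtr_sqr ger0_norm // invr_ge0.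
  rewrite -{1}e ler_sqrt ?addr_ge0 ?sqr_ge0 //.
  have -> : y = 1 - x by lra.
  have : 0 <= (x - 2^-1) ^+ 2 by exact: sqr_ge0.
  rewrite !expr2. move=> h. nra.
rewrite -sqrtr1 ler_sqrt //. have -> : y = 1 - x by lra. rewrite !expr2. nra.
Qed.

Lemma final_ineq (m g h e1 e2 : R) : 0 <= m -> 0 <= g -> g <= h -> 0 <= e1 -> e1 <= 1 ->
  2^-1 <= e2 -> m * g * e1 <= 2 * h * (m * e2).
Proof.
move=> hm hg hgh he1 he1' he2.
have h1 : m * g * e1 <= m * h.
  rewrite -mulrA; apply: ler_wpM2l => //. nra.
apply: le_trans h1 _.
have : 0 <= m * h by nra.
have : m * h * (2 * e2 - 1) >= 0. apply: mulr_ge0 => //. nra. nra.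
lra.
Qed.

Lemma fwd_scale (G : int -> 'M[R]_2) (s : int -> 'cV[R]_2) :
  (forall i, exists2 b, 0 < b <= 2^-1 & G i *m s i = b *: s (i + 1)) ->
  forall i n, exists2 g, 0 < g <= (2^-1) ^+ n & fwd_prod G i n *m s i = g *: s (i + n%:Z).
Proof.
move=> hs i; elim => [|n [g /andP[g0 g1] e]].
  by exists 1; rewrite ?expr0 ?ltr01 //= mul1mx addr0 scale1r.
have [b /andP[b0 b1] eb] := hs (i + n%:Z).
exists (g * b).
  rewrite mulr_gt0 //= exprSr; apply: ler_pM => //; exact: ltW.
rewrite /= -mulmxA e -scalemxAr eb scalerA.
by rewrite -[n.+1]addn1 PoszD addrA.
Qed.

Lemma bwd_scale (G : int -> 'M[R]_2) (u : int -> 'cV[R]_2) :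
  (forall j, exists2 b, 0 < b <= 2^-1 & invmx (G j) *m u (j + 1) = b *: u j) ->
  forall i n, exists2 g, 0 < g <= (2^-1) ^+ n & bwd_prod G i n *m u i = g *: u (i - n%:Z).
Proof.
move=> hu i; elim => [|n [g /andP[g0 g1] e]].
  by exists 1; rewrite ?expr0 ?ltr01 //= mul1mx subr0 scale1r.
have [b /andP[b0 b1] eb] := hu (i - n.+1%:Z).
exists (g * b).
  rewrite mulr_gt0 //= exprSr; apply: ler_pM => //; exact: ltW.
have e' : i - n%:Z = i - n.+1%:Z + 1 by rewrite -[n.+1]addn1 PoszD; ring.
rewrite /= -mulmxA e e' -scalemxAr eb scalerA.
by [].
Qed.

End Main.
Arguments Eline {R}. Arguments Eline_split {R}. Arguments ElineZ {R}. Arguments ElineM {R}. Arguments Eline_sub {R}.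
Arguments enormZ {R}. Arguments sq_bounds {R}. Arguments final_ineq {R}. Arguments fwd_scale {R G s}. Arguments bwd_scale {R G u}.

Lemma cst_subbundle (R : realType) (M : 'M[R]_2) : continuous_subbundle (fun _ : 'cV[R]_2 => M).
Proof.
move=> x. exists (fun _ => M); split; first exact: cst_continuous.
near=> y. apply/andP; split; exact: submx_refl.
Unshelve. all: by end_near.
Qed.

Theorem corollary3p6 (R : realType) (F : int -> 'M[int]_2)
  (k : int -> nat) (n : int -> nat -> nat) :
  (forall i a b, 0 <= F i a b) ->
  (forall i, \det (F i) = 1) ->
  (forall i, (0 < k i)%N /\ ~~ odd (k i)) ->
  (forall i, F i = factored_product (k i) (n i)) ->
  (forall i, n i (k i) <> 0%N /\ n i 1%N <> 0%N) ->
  linear_anosov_family (fun i => map_mx (intr : int -> R) (F i)).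
Proof.
move=> Hnn Hdet Hk HF Hn.
set G := fun i => map_mx (intr : int -> R) (F i).
have Gge1 : forall i a b, 1 <= G i a b.
  move=> i a b; rewrite /G mxE ler1z HF.
  have [h1 h2] := Hk i; have [h3 h4] := Hn i; exact: fp_ge1.
have Gdet : forall i, G i 0 0 * G i 1 1 - G i 0 1 * G i 1 0 = 1.
  by move=> i; rewrite /G !mxE -!intrM -intrB -det22 Hdet.
have Ggood : forall i, good (G i) by move=> i; split; [exact: Gge1 | exact: Gdet].
pose Kst := fun j : int => \matrix_(a < 2, b < 2)
  (if a == b then (if a == 0 then G (- j - 1) 1 1 else G (- j - 1) 0 0) else G (- j - 1) a b) : 'M[R]_2.
have Kgood : forall j, good (Kst j).
  move=> j; split.
    by move=> a b; rewrite mxE; case: (I2P a) => ->; case: (I2P b) => -> /=; exact: Gge1.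
  have := Gdet (- j - 1); rewrite /G !mxE /= => h. by rewrite [X in X - _ = _]mulrC.
have [r hr] := core_exists Ggood.
have [p hp] := core_exists Kgood.
pose u := fun j => v2 (1 - r j) (r j).
pose s := fun i => v2 (1 - p (- i)) (- p (- i)).
have hu : forall j, exists2 b, 0 < b <= 2^-1 & invmx (G j) *m u (j + 1) = b *: u j.
  move=> j; have [_ [A [hA e]]] := hr j.
  have hA0 : 0 < A by apply: lt_le_trans hA; rewrite ltr0n.
  exists A^-1; first by rewrite invr_gt0 hA0 /= lef_pV2 ?posrE ?ltr0n.
  have hGu : G j \in unitmx by rewrite unitmxE det22 Gdet unitr1.
  have e' : u (j + 1) = A^-1 *: (G j *m u j) by rewrite /u e scalerA mulVf ?gt_eqF // scale1r.
  by rewrite e' -scalemxAr mulKmx.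
have hs : forall i, exists2 b, 0 < b <= 2^-1 & G i *m s i = b *: s (i + 1).
  move=> i; have [_ [A [hA e]]] := hp (- i - 1).
  have hA0 : 0 < A by apply: lt_le_trans hA; rewrite ltr0n.
  exists A^-1; first by rewrite invr_gt0 hA0 /= lef_pV2 ?posrE ?ltr0n.
  have ei : - (- i - 1) - 1 = i by ring.
  have ei' : - i - 1 + 1 = - i by ring.
  have ei'' : - (i + 1) = - i - 1 by ring.
  rewrite ei' in e.
  have e0 := congr1 (fun M : 'cV[R]_2 => M 0 0) e.
  have e1 := congr1 (fun M : 'cV[R]_2 => M 1 0) e.
  move: e0 e1; rewrite /= !mul22 !mxE /= ei => e0 e1.
  have hd := Gdet i. rewrite /G !mxE in hd.
  have hAn : A != 0 by rewrite gt_eqF.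
  apply/matrixP => a b.
  have -> : b = 0 by apply/val_inj; case: b => [[]].
  rewrite mul22 [RHS]mxE /s ei'' !mxE.
  case: (I2P a) => -> /=; apply: (mulfI hAn); rewrite mulrA mulfV // mul1r.
    set x := 1 - p (- i - 1); set y := p (- i - 1).
    transitivity ((F i 0 0)%:~R * (A * (1 - p (- i))) - (F i 0 1)%:~R * (A * p (- i)) : R); first ring.
    rewrite -e0 -e1.
    transitivity (((F i 0 0)%:~R * (F i 1 1)%:~R - (F i 0 1)%:~R * (F i 1 0)%:~R) * x : R); first by rewrite /x; ring.
    by rewrite hd mul1r.
  transitivity ((F i 1 0)%:~R * (A * (1 - p (- i))) - (F i 1 1)%:~R * (A * p (- i)) : R); first ring.
  rewrite -e0 -e1.
  transitivity (- ((F i 0 0)%:~R * (F i 1 1)%:~R - (F i 0 1)%:~R * (F i 1 0)%:~R) * p (- i - 1) : R); first ring.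
  by rewrite hd mulN1r.
exists (fun i _ => Eline (s i)), (fun i _ => Eline (u i)).
split.
  by move=> i x z; split; apply/andP; split; exact: submx_refl.
split.
  move=> i x; apply: Eline_split.
  have [/andP[q0 q1] _] := hp (- i). have [/andP[r0 r1] _] := hr i.
  rewrite /s /u !v2E0 !v2E1. apply: lt0r_neq0. nra.
split.
  by move=> i; split; apply: cst_subbundle.
split.
  move=> i x; rewrite /= !ElineM; split.
    have [b /andP[b0 _] ->] := hs i. by apply: ElineZ; rewrite gt_eqF.
  have [_ [A [hA ->]]] := hr i. apply: ElineZ; rewrite gt_eqF //.
  by apply: lt_le_trans hA; rewrite ltr0n.
have sb : forall j, 2^-1 <= enorm (s j) <= 1.
  move=> j; have [/andP[q0 q1] _] := hp (- j).
  rewrite /enorm /s v2E0 v2E1 sqrrN; apply: sq_bounds; rewrite ?subrK //; lra.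
have ub : forall j, 2^-1 <= enorm (u j) <= 1.
  move=> j; have [/andP[q0 q1] _] := hr j.
  rewrite /enorm /u v2E0 v2E1; apply: sq_bounds; rewrite ?subrK //; lra.
exists 2^-1, 2.
split; first by rewrite invr_gt0 ltr0n /= invf_lt1 ?ltr0n // ltr1n.
split; first by rewrite ltr0n.
split.
  move=> i x v m _ /Eline_sub [mu ->].
  have [g /andP[g0 g1] e] := fwd_scale hs i m.
  rewrite -scalemxAr e scalerA !enormZ normrM (gtr0_norm g0).
  apply: final_ineq => //; [exact: ltW | by rewrite /enorm sqrtr_ge0 | by case/andP: (sb (i + m%:Z)) | by case/andP: (sb i)].
move=> i x v m _ /Eline_sub [mu ->].
have [g /andP[g0 g1] e] := bwd_scale hu i m.
rewrite -scalemxAr e scalerA !enormZ normrM (gtr0_norm g0).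
apply: final_ineq => //; [exact: ltW | by rewrite /enorm sqrtr_ge0 | by case/andP: (ub (i - m%:Z)) | by case/andP: (ub i)].
Qed.
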